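(* Let $X$ be a compact metric countable space and $f:X\to X$ a continuous function such that $(X,f)$ is transitive. If there is $m\in\mathbb N$ such that $|\omega_f(x)|\le m$ for every accumulation point $x$ of $X$, then the Ellis semigroup $E(X,f)$ is countable.
   Context: $(X,f)$ is transitive if some point has dense orbit $\{f^n(x):n\in\mathbb N\}$. The Ellis semigroup $E(X,f)$ is the closure of $\{f^n:n\in\mathbb N\}$ in $X^X$ with the product (pointwise) topology. The $\omega$-limit set $\omega_f(x)$ is the set of $y$ with $f^{n_k}(x)\to y$ for some strictly increasing sequence $(n_k)$. An accumulation point is a non-isolated point. *)

(* Defs.v *)
From HB Require Import structures.
From mathcomp Require Import all_boot all_order all_algebra.
From mathcomp Require Import all_classical all_reals all_analysis.
Set Implicit Arguments. Unset Strict Implicit. Unset Printing Implicit Defensive.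
Import Order.TTheory GRing.Theory Num.Theory.
Local Open Scope classical_set_scope.

Definition orbit_of {X : Type} (f : X -> X) (x : X) : set X :=
  range (fun n : nat => iter n f x).

Definition transitive_sys {X : topologicalType} (f : X -> X) : Prop :=
  exists x : X, closure (orbit_of f x) = [set: X].

Definition omega_limit {X : topologicalType} (f : X -> X) (x : X) : set X :=
  [set y | exists n : nat -> nat,
     {homo n : a b / (a < b)%N} /\ ((fun k => iter (n k) f x) @ \oo --> y)].

Definition ellis_semigroup {X : topologicalType} (f : X -> X) : set {ptws X -> X} :=
  closure (range (fun n : nat => (iter n f : {ptws X -> X}))).

(* Main.v *)
Set Warnings "-notation-overridden,-ambiguous-paths,-notation-incompatible-prefix,-deprecated".
Require Import Defs.
From HB Require Import structures.
From mathcomp Require Import all_boot all_order all_algebra.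
From mathcomp Require Import all_classical all_reals all_analysis.
Import Order.TTheory GRing.Theory Num.Theory.
Local Open Scope classical_set_scope.
Local Open Scope card_scope.
Local Open Scope ring_scope.
Definition clus {R : realType} {X : pseudoMetricType R} (u : nat -> X) (z : X) :=
  forall e : R, 0 < e -> forall N, exists2 k, (N <= k)%N & ball z e (u k).

Lemma clus_extract {R : realType} {X : pseudoMetricType R} (u : nat -> X) z :
  clus u z -> exists phi : nat -> nat,
    {homo phi : a b / (a < b)%N} /\ (fun k => u (phi k)) @ \oo --> z.
Proof.
move=> cz.
have H : forall jN : nat * nat, exists k, (jN.2 <= k)%N /\ ball z (jN.1.+1%:R^-1) (u k).
  move=> [j N]; have [k Nk bk] := cz (j.+1%:R^-1) ltac:(by rewrite invr_gt0 ltr0n) N.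
  by exists k.
have [g hg] := choice H.
pose phi := fix phi j := if j is j'.+1 then g (j, (phi j').+1) else g (0%N, 0%N).
exists phi; split.
  apply: homo_ltn; first by move=> ? ? ?; apply: ltn_trans.
  by move=> i /=; have [+ _] := hg (i.+1, (phi i).+1).
apply/cvg_ballP => e e0.
have [J _ HJ] := near_infty_natSinv_lt (PosNum e0).
exists J => // j /= Jj.
apply: (le_ball (e1 := j.+1%:R^-1)); first exact/ltW/HJ.
by case: j {Jj} => [|j] /=; [have [_ +] := hg (0%N, 0%N) | have [_ +] := hg (j.+1, (phi j).+1)].
Qed.

Lemma compact_clus {R : realType} {X : pseudoMetricType R} (u : nat -> X) :
  compact [set: X] -> exists z, clus u z.
Proof.
move=> hc.
have [z [_ cz]] := hc (u @ \oo) _ filterT.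
exists z => e e0 N.
have [w [[k /= Nk <-] bw]] := cz (u @` [set k | (N <= k)%N]) (ball z e)
   ltac:(by exists N => // k Nk; exists k) (nbhsx_ballx _ _ e0).
by exists k.
Qed.

Lemma clus_sub {R : realType} {X : pseudoMetricType R} (u : nat -> X) phi z :
  (forall j, (j <= phi j)%N) -> clus (fun j => u (phi j)) z -> clus u z.
Proof.
move=> hphi cz e e0 N; have [k Nk bk] := cz e e0 N.
by exists (phi k) => //; apply: leq_trans Nk (hphi k).
Qed.

Lemma io_extract {R : realType} {X : pseudoMetricType R} (u : nat -> X) (A : set X) :
  compact [set: X] -> (forall N, exists2 k, (N <= k)%N & A (u k)) ->
  exists z, clus u z /\ (forall e : R, 0 < e -> exists w, A w /\ ball z e w).
Proof.
move=> hc hA.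
have [g hg] : {g : nat -> nat & forall N, (N <= g N)%N /\ A (u (g N))}.
  apply: (@choice _ _ (fun N k => (N <= k)%N /\ A (u k))) => N.
  by have [k ? ?] := hA N; exists k.
have [z cz] := compact_clus (fun j => u (g j)) hc.
exists z; split.
  by apply: clus_sub cz => j; have [] := hg j.
move=> e e0; have [k _ bk] := cz e e0 0%N.
by exists (u (g k)); split => //; have [] := hg k.
Qed.

Lemma omega_of_clus {R : realType} {X : pseudoMetricType R} (f : X -> X) x z :
  clus (fun n => iter n f x) z -> omega_limit f x z.
Proof. by move=> /clus_extract [phi [h1 h2]]; exists phi. Qed.
Lemma iter_cont {T : topologicalType} (f : T -> T) :
  continuous f -> forall n, continuous (iter n f).
Proof.
move=> hf; elim=> [|n IH] x /=; first exact: cvg_id.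
exact: (continuous_comp (IH x) (hf _)).
Qed.

Lemma omega_inv {R : realType} {X : pseudoMetricType R} (f : X -> X) x s :
  continuous f -> omega_limit f x s -> omega_limit f x (f s).
Proof.
move=> hf [n [hn cn]]; exists (fun k => (n k).+1); split.
  by move=> a b ab; rewrite ltnS; apply: hn.
exact: (continuous_cvg _ (hf s) cn).
Qed.

Lemma clus_omega {R : realType} {X : pseudoMetricType R} (f : X -> X) x L r z :
  (0 < L)%N -> clus (fun k => iter (k * L + r) f x) z -> omega_limit f x z.
Proof.
move=> L0 cz; apply: omega_of_clus; apply: (@clus_sub _ _ _ (fun k => (k * L + r)%N)) => //.
by move=> j; rewrite (leq_trans _ (leq_addr _ _)) // leq_pmulr.
Qed.
Lemma pigeon (T : Type) (S : set T) (f : T -> T) m c :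
  S #<= `I_m -> (forall s, S s -> S (f s)) -> S c ->
  iter (m`! + m`!) f c = iter m`! f c.
Proof.
move=> hS hinv Sc.
have inS : forall i, S (iter i f c) by elim=> //= i IH; apply: hinv.
have [i [j [ij [jm eqij]]]] : exists i j, (i < j)%N /\ (j <= m)%N /\ iter i f c = iter j f c.
  apply: contrapT => hneq.
  have inj : {in `I_m.+1 &, injective (fun i => iter i f c)}.
    move=> a b; rewrite !inE /= => am bm eqab.
    case: (ltngtP a b) => // ab; exfalso; apply: hneq.
      by exists a, b; split => //; split => //; rewrite -ltnS.
    by exists b, a; split => //; split => //; rewrite -ltnS.
  have e := inj_card_eq inj.
  have : (`I_m.+1 #<= `I_m) by rewrite -(card_le_eql e); apply: card_le_trans hS;
     apply: subset_card_le => _ [k _ <-].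
  by rewrite card_le_II ltnn.
set q := (j - i)%N.
have q0 : (0 < q)%N by rewrite subn_gt0.
have step : forall t, (i <= t)%N -> iter (t + q) f c = iter t f c.
  move=> t it.
  have -> : (t + q = (t - i) + j)%N by rewrite /q addnBA ?(ltnW ij) // addnC addnBAC // addnC.
  by rewrite iterD -eqij -iterD subnK.
have per : forall t k, (i <= t)%N -> iter (t + k * q) f c = iter t f c.
  move=> t k it; elim: k => [|k IH]; first by rewrite mul0n addn0.
  by rewrite mulSn (addnC q) addnA step ?IH // (leq_trans it) // leq_addr.
have qd : (q %| m`!)%N by apply: dvdn_fact; rewrite q0 /= (leq_trans _ jm) // leq_subr.
rewrite -{2}(divnK qd) per //.
by rewrite (leq_trans (ltnW ij)) // (leq_trans jm) // fact_geq.
Qed.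
Lemma sep {T : topologicalType} : hausdorff_space T -> forall a b : T, a <> b ->
  exists A B, nbhs a A /\ nbhs b B /\ (forall z, A z -> B z -> False).
Proof.
move=> hH a b ab; apply: contrapT => H; apply: ab; apply: hH => A B nA nB.
apply: contrapT => hAB; apply: H; exists A, B; split => //; split => // z Az Bz.
by apply: hAB; exists z.
Qed.

Lemma ev_nbhs {T : topologicalType} {U : uniformType} (p : {ptws T -> U}) (x : T)
  (V : set U) : nbhs (p x) V -> nbhs p [set q : {ptws T -> U} | V (q x)].
Proof.
move=> hV.
have h : {ptws, nbhs p --> p} by [].
exact: (proj1 (@pointwise_cvgP T U (nbhs p) p _) h x V hV).
Qed.

Lemma fin_sep {T : topologicalType} (S : set T) (y : T) :
  hausdorff_space T -> finite_set S -> exists W, nbhs y W /\ (forall z, S z -> W z -> z = y).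
Proof.
move=> hH fS.
have cl : closed (S `\ y).
  apply: (proj1 accessible_finite_set_closed (@hausdorff_accessible T hH)); exact: finite_setD.
exists (~` (S `\ y)); split.
  apply: open_nbhs_nbhs; split; first by rewrite openC.
  by move=> [_ /=]; apply.
by move=> z Sz Wz; apply: contrapT => zy; apply: Wz; split.
Qed.
Lemma KL {R : realType} {X : pseudoMetricType R} (f : X -> X) (m : nat) x r :
  hausdorff_space X -> compact [set: X] -> continuous f ->
  omega_limit f x #<= `I_m ->
  exists y : X, (fun k => iter (k * m`! + r)%N f x) @ \oo --> y.
Proof.
move=> hH hc hf hS.
set L := m`!.
have L0 : (0 < L)%N := fact_gt0 m.
set S := omega_limit f x.
set a := fun k => iter (k * L + r)%N f x.
set g := iter L f.
have ha : forall k, a k.+1 = g (a k) by move=> k; rewrite /a /g mulSn -addnA iterD.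
have gc : continuous g := @iter_cont X f hf L.
have Sinv : forall s, S s -> S (f s) := fun s => @omega_inv R X f x s hf.
have clS : forall z, clus a z -> S z := fun z => @clus_omega R X f x L r z L0.
have [y0 cy0] := compact_clus a hc.
set y := g y0.
have gy : g y = y.
  rewrite /y /g -iterD. exact: (@pigeon X S f m y0 hS Sinv (clS _ cy0)).
have cy : clus a y.
  move=> e e0 N.
  have := gc y0 (ball y e) (nbhsx_ballx _ _ e0).
  move=> /nbhs_ballP [d /= d0 hd].
  have [k Nk bk] := cy0 d d0 N.
  by exists k.+1; [apply: leqW | rewrite ha; apply: hd].
have fS : finite_set S := card_le_finite hS (finite_II m).
have [W [nW hW]] := @fin_sep X S y hH fS.
have [eps eps0 hEps] := proj1 (nbhs_ballP _ _) nW.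
exists y; apply/cvg_ballP => del del0.
set rho := Num.min del (eps / 2).
have rho0 : 0 < rho by rewrite lt_min del0 divr_gt0.
have := gc y (ball y rho); rewrite {1}gy => /(_ (nbhsx_ballx _ _ rho0)).
move=> /nbhs_ballP [eta /= eta0 heta].
set eta' := Num.min eta rho.
have eta'0 : 0 < eta' by rewrite lt_min eta0 rho0.
set V := ball y eta'.
set B' := ball y rho.
have VB : V `<=` B' by apply: le_ball; rewrite ge_min lexx orbT.
have ev : exists N0, forall k, (N0 <= k)%N -> B' (a k).
  apply: contrapT => hne.
  have io : forall N, exists2 k, (N <= k)%N & (B' `\` V) (a k).
    move=> N; apply: contrapT => hno.
    have [k1 Nk1 bk1] := cy eta' eta'0 N.
    apply: hne; exists k1 => k k1k.
    have allB : forall d, B' (a (k1 + d)%N).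
      elim=> [|d IH]; first by rewrite addn0; exact: VB.
      rewrite addnS ha; apply: heta.
      have : V (a (k1 + d)%N).
        apply: contrapT => nV; apply: hno; exists (k1 + d)%N => //.
        exact: leq_trans Nk1 (leq_addr _ _).
      by apply: le_ball; rewrite ge_min lexx.
    by rewrite -(subnKC k1k); apply: allB.
  have [z [cz hz]] := @io_extract R X a _ hc io.
  have Sz := clS z cz.
  have zy : z = y.
    apply: hW => //; apply: hEps.
    have [w [[Bw _] bzw]] := hz (eps / 2) (divr_gt0 eps0 (ltr0Sn _ 1)).
    rewrite (splitr eps); apply: (ball_triangle (y := w)); last exact: ball_sym.
    by apply: le_ball Bw; rewrite ge_min lexx orbT.
  move: hz; rewrite zy => /(_ eta' eta'0) [w [[_ nVw] bw]].
  by apply: nVw.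
have [N0 hN0] := ev.
exists N0 => // k /= hk.
by apply: le_ball (hN0 k hk); rewrite ge_min lexx.
Qed.
Lemma late {R : realType} {X : pseudoMetricType R} (f : X -> X) (p : {ptws X -> X}) :
  hausdorff_space X -> ellis_semigroup f p -> (forall n, p <> iter n f) ->
  forall N (W : set {ptws X -> X}), nbhs p W -> exists2 n, (N <= n)%N & W (iter n f).
Proof.
move=> hH Ep hp; elim=> [|N IH] W nW.
  by have [q [[n _ <-] Wq]] := Ep W nW; exists n.
have [x hx] : exists x, p x <> iter N f x.
  apply: contrapT => h; apply: (hp N); apply: funext => x.
  by apply: contrapT => hx; apply: h; exists x.
have [A [B [nA [nB hAB]]]] := @sep X hH _ _ hx.
have nW' : nbhs p (W `&` [set q : {ptws X -> X} | A (q x)]).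
  by apply: filterI => //; apply: ev_nbhs.
have [n Nn [Wn An]] := IH _ nW'.
exists n => //; rewrite ltn_neqAle Nn andbT; apply/eqP => eNn.
by apply: (hAB (iter n f x)) => //; rewrite -eNn; apply: nbhs_singleton.
Qed.

Lemma comm_orbit {R : realType} {X : pseudoMetricType R} (f : X -> X) (p : {ptws X -> X}) x0 :
  hausdorff_space X -> continuous f -> ellis_semigroup f p ->
  forall k, p (iter k f x0) = iter k f (p x0).
Proof.
move=> hH hf Ep k; apply: contrapT => hne.
have [A [B [nA [nB hAB]]]] := @sep X hH _ _ hne.
have nB' : nbhs (p x0) (iter k f @^-1` B) by exact: (@iter_cont X f hf k (p x0) B nB).
have nW : nbhs p ([set q : {ptws X -> X} | A (q (iter k f x0))] `&`
                   [set q : {ptws X -> X} | (iter k f @^-1` B) (q x0)]).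
  by apply: filterI; apply: ev_nbhs.
have [q [[n _ <-] [Aq Bq]]] := Ep _ nW.
apply: (hAB (iter n f (iter k f x0))) => //.
by move: Bq; rewrite /= -!iterD addnC.
Qed.

Lemma isolated_in_orbit {T : topologicalType} (f : T -> T) x0 x :
  closure (orbit_of f x0) = [set: T] -> ~ limit_point [set: T] x ->
  exists k, x = iter k f x0.
Proof.
move=> hcl hlp.
have [U nU hU] : exists2 U, nbhs x U & forall y, U y -> y = x.
  apply: contrapT => h; apply: hlp => U nU; apply: contrapT => h2; apply: h.
  exists U => // y Uy; apply: contrapT => yx; apply: h2; exists y; split => //.
  exact/eqP.
have : closure (orbit_of f x0) x by rewrite hcl.
move=> /(_ U nU) [y [[k _ <-] Uy]].
by exists k; rewrite (hU _ Uy).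
Qed.
Lemma residue {R : realType} {X : pseudoMetricType R} (f : X -> X) (m : nat) (p : {ptws X -> X}) :
  hausdorff_space X -> compact [set: X] -> continuous f ->
  (forall x : X, limit_point [set: X] x -> omega_limit f x #<= `I_m) ->
  ellis_semigroup f p -> (forall n, p <> iter n f) ->
  exists r, (r < m`!)%N /\ forall x, limit_point [set: X] x ->
     (fun k => iter (k * m`! + r)%N f x) @ \oo --> p x.
Proof.
move=> hH hc hf hm Ep hp.
set L := m`!.
have L0 : (0 < L)%N := fact_gt0 m.
apply: contrapT => hno.
have main : forall R', (R' <= L)%N -> exists N (W : set {ptws X -> X}), nbhs p W /\
   forall n, (N <= n)%N -> (n %% L < R')%N -> W (iter n f) -> False.
  elim=> [|R' IH] RL.
    by exists 0%N, setT; split => //; apply: filterT.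
  have [N [W [nW hW]]] := IH (ltnW RL).
  have [x [lx nx]] : exists x, limit_point [set: X] x /\
      ~ ((fun k => iter (k * L + R')%N f x) @ \oo --> p x).
    apply: contrapT => h; apply: hno; exists R'; split => // x lx.
    by apply: contrapT => nc; apply: h; exists x.
  have [y cy] := @KL R X f m x R' hH hc hf (hm x lx).
  have yp : p x <> y by move=> e; apply: nx; rewrite e.
  have [A [B [nA [nB hAB]]]] := @sep X hH _ _ yp.
  have [K _ hK] := cy B nB.
  exists (maxn N (K * L)), (W `&` [set q : {ptws X -> X} | A (q x)]); split.
    by apply: filterI => //; apply: ev_nbhs.
  move=> n; rewrite geq_max => /andP [Nn KLn] nR [Wn An].
  rewrite ltnS leq_eqVlt in nR; case/orP: nR => [/eqP nR | nR].
    apply: (hAB (iter n f x)) => //.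
    have := hK (n %/ L)%N; rewrite /= leq_divRL // => /(_ KLn).
    by rewrite -nR -divn_eq.
  exact: (hW n Nn nR Wn).
have [N [W [nW hW]]] := main L (leqnn L).
have [n Nn Wn] := @late R X f p hH Ep hp N W nW.
exact: (hW n Nn (ltn_pmod _ L0) Wn).
Qed.
Local Close Scope ring_scope.

Theorem theorem4p4 (R : realType) (X : pseudoMetricType R) (f : X -> X) (m : nat) :
  hausdorff_space X ->
  compact [set: X] ->
  countable [set: X] ->
  continuous f ->
  transitive_sys f ->
  (forall x : X, limit_point [set: X] x -> omega_limit f x #<= `I_m) ->
  countable (ellis_semigroup f).
Proof.
move=> hH hc hX hf [x0 hx0] hm.
set L := m`!.
pose Pset (y : X) (r : nat) := [set p : {ptws X -> X} | ellis_semigroup f p /\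
   (forall n, p <> iter n f) /\ p x0 = y /\ forall x, limit_point [set: X] x ->
     (fun k => iter (k * L + r)%N f x) @ \oo --> p x].
pose h (t : nat * (X * nat)) : {ptws X -> X} :=
  if (t.2.2 < L)%N then xget (iter 0 f : {ptws X -> X}) (Pset t.2.1 t.2.2) else iter t.1 f.
pose D := [set: nat] `*` ([set: X] `*` [set: nat]).
have sub : ellis_semigroup f `<=` h @` D.
  move=> p Ep.
  have [[n pn]|hp] := pselect (exists n, p = iter n f).
    by exists (n, (x0, L)) => //; rewrite /h /= ltnn.
  have hp' : forall n, p <> iter n f by move=> n e; apply: hp; exists n.
  have [r [rL hr]] := @residue R X f m p hH hc hf hm Ep hp'.
  have Pp : (Pset (p x0) r p).
    by split => //; split => //; split.
  exists (0%N, (p x0, r)) => //; rewrite /h /= rL.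
  case: xgetP => [q -> [Eq [hq [qx0 hqr]]] | /(_ p) //].
  apply: funext => x.
  have [lx|nlx] := pselect (limit_point [set: X] x).
    exact: (cvg_unique hH (hqr x lx) (hr x lx)).
  have [k ->] := @isolated_in_orbit X f x0 x hx0 nlx.
  by rewrite (@comm_orbit R X f _ x0 hH hf Eq) (@comm_orbit R X f p x0 hH hf Ep) qx0.
apply: (sub_countable (B := D)).
  exact: card_le_trans (subset_card_le sub) (card_image_le h D).
apply: countableX; first exact: countableP.
by apply: countableX => //; exact: countableP.
Qed.
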